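(* Let $X$ be a finite set, $f:2^X\to\mathbb{R}_{\ge0}$ a normalized monotone submodular function, $n\ge 2$ an integer with $n\le|X|$, and $S^*\in\arg\max_{S\subseteq X,\,|S|\le n}f(S)$. Let $S=S_n=\{x_1,\dots,x_n\}$ be produced by the optimistic algorithm ($S_0=\emptyset$, $x_i\in\arg\max_{x\in X\setminus S_{i-1}}\bar f(x\mid S_{i-1})$, $S_i=S_{i-1}\cup\{x_i\}$), and assume $\bar f(x_i\mid S_{i-1})>0$ for $3\le i\le n$. Then \[ f(S)\ \ge\ \left(1-e^{-\frac{1}{n}\left(2+\sum_{i=3}^n \frac{f(x_i\mid S_{i-1})}{\bar f(x_i\mid S_{i-1})}\right)}\right) f(S^* ). \] Equivalently, in terms of the 2-marginal curvature $c_2(x\mid S)=1-f(x\mid S)/\bar f(x\mid S)$, \[ f(S)\ \ge\ \left(1-e^{-\frac{1}{n}\left(2+\sum_{i=3}^n (1-c_2(x_i\mid S_{i-1}))\right)}\right) f(S^* ). \]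
   Context: $f(x\mid A):=f(A\cup\{x\})-f(A)$, $f(x):=f(\{x\})$, $f(x\mid y):=f(x\mid\{y\})$. Pairwise upper estimate: $\bar f(x\mid S):=\min_{A\subseteq S,\,|A|\le1} f(x\mid A)$ (so $\bar f(x\mid\emptyset)=f(x)$ and $\bar f(x\mid S)=\min_{y\in S}f(x\mid y)$ for $S\neq\emptyset$). The $k$-marginal curvature of $f$ at $x\in X\setminus S$ given $S$ is $c_k(x\mid S)=1-\max_{A\subseteq S,|A|<k} f(x\mid S)/f(x\mid A)$; for $k=2$ this equals $1-f(x\mid S)/\bar f(x\mid S)$. *)

(* Defs.v *)
From HB Require Import structures.
From mathcomp Require Import all_boot all_order all_algebra.
From mathcomp Require Import all_classical all_reals all_analysis.
Set Implicit Arguments. Unset Strict Implicit. Unset Printing Implicit Defensive.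
Import Order.TTheory GRing.Theory Num.Theory.
Local Open Scope ring_scope.

Section Defs.
Variables (R : realType) (X : finType).
Implicit Types (f : {set X} -> R) (A B S : {set X}) (x : X).

Definition marg f x A : R := f (x |: A) - f A.

Definition fbar f x S : R :=
  \big[Order.min/marg f x (@finset.set0 X)]_(A in powerset S | (#|A| <= 1)%N) marg f x A.

Definition sf_normalized f := f (@finset.set0 X) = 0.
Definition sf_nonneg f := forall A, 0 <= f A.
Definition sf_monotone f := forall A B, A \subset B -> f A <= f B.
Definition sf_submodular f := forall A B, f (A :|: B) + f (A :&: B) <= f A + f B.

(* S_i = {x_1,...,x_i} (0-indexed: elements xs j with j < i) *)
Definition prefix_set (n : nat) (xs : 'I_n -> X) (i : nat) : {set X} :=
  [set xs j | j : 'I_n & (j < i)%N].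

Definition optimistic_run f (n : nat) (xs : 'I_n -> X) : Prop :=
  forall i : 'I_n,
    xs i \notin prefix_set xs i /\
    (forall x, x \notin prefix_set xs i -> fbar f x (prefix_set xs i) <= fbar f (xs i) (prefix_set xs i)).

Definition is_opt f (n : nat) (Sstar : {set X}) : Prop :=
  (#|Sstar| <= n)%N /\ forall S, (#|S| <= n)%N -> f S <= f Sstar.
End Defs.

(* Main.v *)
Require Import Defs.
From HB Require Import structures.
From mathcomp Require Import all_boot all_order all_algebra.
From mathcomp Require Import all_classical all_reals all_analysis.
From mathcomp Require Import ring lra.
Import Order.TTheory GRing.Theory Num.Theory.
Local Open Scope ring_scope.
Set Implicit Arguments. Unset Strict Implicit.

Section Prefix.
Variables (X : finType) (n : nat) (xs : 'I_n -> X).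

Lemma prefix0 : prefix_set xs 0 = finset.set0.
Proof. by apply/finset.setP => z; rewrite finset.inE; apply/imsetP => -[j]; rewrite finset.inE ltn0. Qed.

Lemma prefixS k (hk : (k < n)%N) : prefix_set xs k.+1 = xs (Ordinal hk) |: prefix_set xs k.
Proof.
apply/finset.setP => z; rewrite finset.in_setU1; apply/imsetP/idP.
- move=> [j]; rewrite finset.inE ltnS leq_eqVlt => /orP [/eqP jk|jk] ->.
    by rewrite (_ : j = Ordinal hk) ?eqxx //; apply: val_inj.
  by apply/orP; right; apply/imsetP; exists j => //; rewrite finset.inE.
- case/orP => [/eqP ->|/imsetP [j]]; first by exists (Ordinal hk); rewrite // finset.inE.
  rewrite finset.inE => jk ->; exists j => //; rewrite finset.inE; exact: ltnW.
Qed.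

Lemma prefix_card k : (k <= 1)%N -> (#|prefix_set xs k| <= 1)%N.
Proof.
move=> k1; apply/card_le1_eqP => a b /imsetP [j] + -> /imsetP [j'] + ->.
rewrite !finset.inE => hj hj'.
have -> : j = j' by apply: val_inj; move: hj hj'; case: k k1 => [|[|]] //= _; rewrite !ltnS !leqn0 => /eqP -> /eqP ->.
by [].
Qed.
End Prefix.
Section Helpers.
Variables (R : realType) (X : finType) (f : {set X} -> R).
Hypotheses (fmono : sf_monotone f) (fsub : sf_submodular f).

Lemma marg_ge0 (x : X) (A : {set X}) : 0 <= marg f x A.
Proof. by rewrite /marg subr_ge0; apply: fmono; apply: finset.subsetUr. Qed.

Lemma marg_anti (x : X) (A B : {set X}) : A \subset B -> marg f x B <= marg f x A.
Proof.
move=> AB; rewrite /marg.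
have h := fsub (x |: A) B.
have e : (x |: A) :|: B = x |: B.
  by rewrite -finset.setUA (finset.setUidPr AB).
rewrite e in h.
have h2 : f A <= f ((x |: A) :&: B).
  apply: fmono; rewrite finset.subsetI AB andbT; exact: finset.subsetUr.
lra.
Qed.

Lemma marg_le_fbar (x : X) (S : {set X}) : marg f x S <= fbar f x S.
Proof.
rewrite /fbar; apply: (big_ind (fun v => marg f x S <= v)).
- exact: marg_anti (finset.sub0set _).
- by move=> a b ha hb; rewrite le_min ha hb.
- move=> A /andP [] /[!finset.powersetE] AS _; exact: marg_anti.
Qed.

Lemma fbar_le_marg (x : X) (S A : {set X}) : A \subset S -> (#|A| <= 1)%N -> fbar f x S <= marg f x A.
Proof.
move=> AS A1; rewrite /fbar (bigD1 A) /=; last by rewrite finset.powersetE AS.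
by rewrite ge_min lexx.
Qed.

Lemma sub_seq (S : {set X}) (s : seq X) :
  f (S :|: [set y in s]) - f S <= \sum_(y <- s) marg f y S.
Proof.
elim: s => [|y s IH].
  rewrite big_nil.
  have -> : [set y in [::]] = finset.set0 :> {set X} by apply/finset.setP => z; rewrite finset.inE.
  by rewrite finset.setU0 subrr.
rewrite big_cons.
have -> : S :|: [set z in y :: s] = y |: (S :|: [set z in s]).
  apply/finset.setP => z; rewrite !finset.inE; by case: (z == y); rewrite ?orbT.
have h := @marg_anti y _ _ (finset.subsetUl S [set z in s]).
rewrite /marg in h *; lra.
Qed.
End Helpers.

Lemma sum_split (R : realType) (n : nat) (n2 : (2 <= n)%N) (F : 'I_n -> R) :
  \sum_(i < n | (i < n)%N) (if (2 <= i)%N then F i else 1) = 2 + \sum_(i < n | (2 <= i)%N) F i.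
Proof.
have e1 : \sum_(i < n) (if (2 <= i)%N then 0 else 1 : R) = 2.
  have := @big_ord_widen _ 0 +%R 2 n (fun _ => (1 : R)) n2.
  rewrite big_ord_recr big_ord_recr big_ord0 /= add0r => h.
  apply: (@eq_trans _ _ (1 + 1)); last lra.
  rewrite h [RHS]big_mkcond; apply: eq_bigr => i _; rewrite (ltnNge i 2); by case: (2 <= i)%N.
rewrite big_mkcond.
rewrite (eq_bigr (fun i : 'I_n => (if (2 <= i)%N then F i else 0) + (if (2 <= i)%N then 0 else 1))); last first.
  move=> i _; rewrite ltn_ord; case: (2 <= i)%N; by rewrite ?addr0 ?add0r.
by rewrite big_split /= e1 -big_mkcond addrC.
Qed.

Theorem corollary1 (R : realType) (X : finType) (f : {set X} -> R) (n : nat)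
  (Sstar : {set X}) (xs : 'I_n -> X) :
  sf_nonneg f -> sf_normalized f -> sf_monotone f -> sf_submodular f ->
  (2 <= n)%N -> (n <= #|X|)%N ->
  is_opt f n Sstar ->
  optimistic_run f xs ->
  (forall i : 'I_n, (2 <= i)%N -> 0 < fbar f (xs i) (prefix_set xs i)) ->
  f (prefix_set xs n) >=
    (1 - expR (- (n%:R^-1 * (2 + \sum_(i < n | (2 <= i)%N)
        marg f (xs i) (prefix_set xs i) / fbar f (xs i) (prefix_set xs i))))) * f Sstar.
Proof.
move=> fnn fnorm fmono fsub n2 nX [Scard Sopt] run pos.
set P := prefix_set xs.
have n0 : (0 < n)%N by apply: leq_trans n2.
set fs := f Sstar.
have fs0 : 0 <= fs by apply: fnn.
set r := fun i : 'I_n => if (2 <= i)%N then marg f (xs i) (P i) / fbar f (xs i) (P i) else 1.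
have fb0 : forall i : 'I_n, 0 <= fbar f (xs i) (P i).
  move=> i; apply: le_trans (marg_le_fbar fmono fsub _ _); exact: marg_ge0.
have rprop : forall i : 'I_n, [/\ 0 <= r i, r i <= 1 & marg f (xs i) (P i) = r i * fbar f (xs i) (P i)].
  move=> i; rewrite /r; case: ifP => hi.
  - have p := pos i hi; have m0 := @marg_ge0 _ _ _ fmono (xs i) (P i).
    have ml := marg_le_fbar fmono fsub (xs i) (P i).
    split; first by apply: divr_ge0 => //; exact: ltW.
      by rewrite ler_pdivrMr // mul1r.
    by rewrite mulrVK // unitfE gt_eqF.
  - split => //; rewrite mul1r; apply/eqP; rewrite eq_le marg_le_fbar //=.
    apply: fbar_le_marg => //; apply: prefix_card; move: hi; case: (val i) => [|[|]] //.
have key : forall i : 'I_n, fs - f (P i) <= n%:R * fbar f (xs i) (P i).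
  move=> i.
  have eS : [set y in enum Sstar] = Sstar by apply/finset.setP => z; rewrite finset.inE mem_enum.
  have h1 : fs <= f (P i :|: [set y in enum Sstar]).
    by rewrite eS; apply: fmono; apply: finset.subsetUr.
  have h2 := sub_seq fmono fsub (P i) (enum Sstar).
  rewrite big_enum /= in h2.
  have h3 : \sum_(y in Sstar) marg f y (P i) <= \sum_(y in Sstar) fbar f (xs i) (P i).
    apply: ler_sum => y _.
    case: (boolP (y \in P i)) => yP.
      rewrite /marg (finset.setUidPr _) ?finset.sub1set // subrr; exact: fb0.
    apply: le_trans (marg_le_fbar fmono fsub _ _) _; exact: (run i).2.
  rewrite sumr_const -mulr_natl in h3.
  have h4 : #|Sstar|%:R * fbar f (xs i) (P i) <= n%:R * fbar f (xs i) (P i).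
    by apply: ler_wpM2r => //; rewrite ler_nat.
  lra.
have claim : forall k, (k <= n)%N -> fs - f (P k) <= expR (- (n%:R^-1 * \sum_(i < n | (i < k)%N) r i)) * fs.
  elim => [_|k IH hk].
    rewrite big_pred0 // mulr0 oppr0 expR0 mul1r /P prefix0 fnorm; lra.
  have {}IH := IH (ltnW hk).
  set i := Ordinal hk.
  have -> : \sum_(j < n | (j < k.+1)%N) r j = r i + \sum_(j < n | (j < k)%N) r j.
    rewrite (bigD1 i) //=; congr (_ + _); apply: eq_bigl => j.
    rewrite ltnS leq_eqVlt -val_eqE /=; case: eqP => [->|_]; by rewrite ?ltnn ?andbT.
  have eP : P k.+1 = xs i |: P k by rewrite /P prefixS.
  have [r0 r1 rm] := rprop i.
  have kk := key i.
  rewrite /= in r0 r1 rm kk.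
  set E := expR _ in IH.
  set fb := fbar _ _ _ in rm kk.
  set t := n%:R^-1 : R.
  have t0 : 0 < t by rewrite invr_gt0 ltr0n.
  have tn : n%:R * t = 1 by rewrite mulfV // pnatr_eq0 -lt0n.
  have E0 : 0 <= E by rewrite /E expR_ge0.
  have hstep : fs - f (P k.+1) <= (1 - t * r i) * (fs - f (P k)).
    rewrite eP; have : f (xs i |: P k) = f (P k) + marg f (xs i) (P k) by rewrite /marg; lra.
    move=> ->; rewrite rm.
    have : t * (fs - f (P k)) <= fb.
      have := ler_wpM2l (ltW t0) kk; by rewrite (mulrA t) (mulrC t n%:R) tn mul1r.
    move=> h; have h' := ler_wpM2l r0 h.
    have -> : (1 - t * r i) * (fs - f (P k)) = (fs - f (P k)) - r i * (t * (fs - f (P k))) by ring.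
    lra.
  have hc : 0 <= 1 - t * r i.
    have tle : t <= 1 by rewrite invf_le1 ?ler1n ?ltr0n.
    have := ler_pM (ltW t0) r0 tle r1; rewrite mul1r; lra.
  apply: le_trans hstep _.
  apply: le_trans (ler_wpM2l hc IH) _.
  rewrite mulrA; apply: ler_wpM2r => //.
  rewrite mulrDr opprD expRD; apply: ler_wpM2r => //.
  have := expR_ge1Dx (- (t * r i)); lra.
have := claim n (leqnn n).
rewrite /r sum_split //.
set E := expR _; move=> h.
rewrite mulrBl mul1r; lra.
Qed.
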